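(* Let $L$ be multi-group scale invariant and twice differentiable on $U=\{x\in\mathbb{R}^d: x_k\neq0\ \forall k\}$, and let $\rho:=\sup\{\lambda_{\max}(\nabla^2L(x)) : \|x_k\|_2=1\ \forall k\in[K]\}<\infty$. Then for any $x\in U$ and $v\in\mathbb{R}^d$ with $\langle x_k,v_k\rangle=0$ for all $k\in[K]$, $$L(x+v)-L(x)\le\langle v,\nabla L(x)\rangle+\frac{\rho}{2}\sum_{k=1}^K\frac{\|v_k\|_2^2}{\|x_k\|_2^2}.$$
   Context: Fix positive integers $d_1,\ldots,d_K$ with $d=\sum_k d_k$ and write $x\in\mathbb{R}^d$ as $x=(x_1,\ldots,x_K)$ with $x_k\in\mathbb{R}^{d_k}$ (consecutive blocks); similarly $v=(v_1,\dots,v_K)$. A function $f$ on $U$ is multi-group scale invariant iff $f(c_1x_1,\ldots,c_Kx_K)=f(x_1,\ldots,x_K)$ for all $x\in U$ and all $c_1,\ldots,c_K>0$. *)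

(* Defs.v *)
From HB Require Import structures.
From mathcomp Require Import all_boot all_order all_algebra.
From mathcomp Require Import all_classical all_reals all_analysis.
Set Implicit Arguments. Unset Strict Implicit. Unset Printing Implicit Defensive.
Import Order.TTheory GRing.Theory Num.Theory numFieldNormedType.Exports.
Local Open Scope classical_set_scope.
Local Open Scope ring_scope.

Section Defs.
Variables (R : realType) (K : nat) (dk : 'I_K -> nat).

Definition tot_dim := (\sum_(k < K) dk k)%N.

(* coordinate i (0-based) belongs to the k-th consecutive block *)
Definition in_block (k : 'I_K) (i : nat) : bool :=
  ((\sum_(j < K | (j < k)%N) dk j)%N <= i)%N && (i < \sum_(j < K | (j <= k)%N) dk j)%N.

Definition blk_sqnorm (x : 'rV[R]_tot_dim) (k : 'I_K) : R :=
  \sum_(i < tot_dim | in_block k i) x ord0 i ^+ 2.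

Definition blk_dot (x v : 'rV[R]_tot_dim) (k : 'I_K) : R :=
  \sum_(i < tot_dim | in_block k i) x ord0 i * v ord0 i.

Definition blk_nonzero (x : 'rV[R]_tot_dim) (k : 'I_K) : bool :=
  [exists i : 'I_tot_dim, in_block k i && (x ord0 i != 0)].

Definition U_set : set 'rV[R]_tot_dim := [set x | forall k, blk_nonzero x k].

(* (c_1 x_1, ..., c_K x_K) *)
Definition blk_scale (c : 'I_K -> R) (x : 'rV[R]_tot_dim) : 'rV[R]_tot_dim :=
  \row_(i < tot_dim) ((\sum_(k < K | in_block k i) c k) * x ord0 i).

Definition multi_group_scale_invariant (f : 'rV[R]_tot_dim -> R) (A : set 'rV[R]_tot_dim) :=
  forall x, A x -> forall c : 'I_K -> R, (forall k, 0 < c k) ->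
    f (blk_scale c x) = f x.

Definition e_ (i : 'I_tot_dim) : 'rV[R]_tot_dim := delta_mx ord0 i.

Definition partial (i : 'I_tot_dim) (f : 'rV[R]_tot_dim -> R) : 'rV[R]_tot_dim -> R :=
  fun y => 'D_(e_ i) f y.

Definition gradient (f : 'rV[R]_tot_dim -> R) (x : 'rV[R]_tot_dim) : 'rV[R]_tot_dim :=
  \row_(i < tot_dim) partial i f x.

Definition hessian (f : 'rV[R]_tot_dim -> R) (x : 'rV[R]_tot_dim) : 'M[R]_tot_dim :=
  \matrix_(i < tot_dim, j < tot_dim) partial j (partial i f) x.

(* twice (Frechet) differentiable on A: f differentiable and its derivative
   (i.e. each component of the gradient) differentiable at every point of A *)
Definition twice_differentiable_on (f : 'rV[R]_tot_dim -> R) (A : set 'rV[R]_tot_dim) :=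
  forall x, A x -> differentiable f x /\
    forall i : 'I_tot_dim, differentiable (partial i f) x.

Definition dot (u v : 'rV[R]_tot_dim) : R := \sum_(i < tot_dim) u ord0 i * v ord0 i.

Definition lambda_max (M : 'M[R]_tot_dim) : R := sup [set a : R | eigenvalue M a].

Definition rho_set (f : 'rV[R]_tot_dim -> R) : set R :=
  [set lambda_max (hessian f x) | x in [set x : 'rV[R]_tot_dim | forall k, blk_sqnorm x k = 1]].

End Defs.

(* Main.v *)
Require Import Defs.
From HB Require Import structures.
From mathcomp Require Import all_boot all_order all_algebra.
From mathcomp Require Import all_classical all_reals all_analysis.
From mathcomp Require Import ring lra zify.
From Stdlib Require Import Lia.
Import Order.TTheory GRing.Theory Num.Theory numFieldNormedType.Exports.
Local Open Scope classical_set_scope.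
Local Open Scope ring_scope.

Lemma is_derive_lin (R : realType) (a t : R) : is_derive t 1 (fun s : R => a * s) a.
Proof.
have := @is_deriveZ R R^o R^o id a t 1 1 (is_derive_id t 1).
by rewrite /GRing.scale /= mulr1.
Qed.

Lemma is_derive_sq (R : realType) (t : R) : is_derive t 1 (fun s : R => s ^+ 2) (2 * t).
Proof.
have := @is_deriveX R R^o id 2 t 1 1 (is_derive_id t 1).
by rewrite /GRing.scale /= mulr1 expr1.
Qed.

Lemma deriv_cont (R : realType) (f df : R -> R) (a b : R) :
  (forall t : R, is_derive t (1:R) f (df t)) -> {within `[a, b], continuous f}.
Proof.
move=> d; apply: derivable_within_continuous => t _.
by have [] := d t.
Qed.

Lemma taylor1D (R : realType) (g g1 g2 : R -> R) (M : R) :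
  (forall t : R, is_derive t (1:R) g (g1 t)) ->
  (forall t : R, is_derive t (1:R) g1 (g2 t)) ->
  (forall t, 0 <= t <= 1 -> g2 t <= M) ->
  g 1 - g 0 <= g1 0 + M / 2.
Proof.
move=> dg dg1 hM.
pose k := fun t => g1 t - M * t.
have dk (t : R) : is_derive t (1:R) k (g2 t - M).
  have := is_deriveB (dg1 t) (is_derive_lin R M t). done.
have kle t : 0 <= t <= 1 -> g1 t - g1 0 - M * t <= 0.
  move=> /andP[t0 t1]; case: (ler0P t) => [tle0|tgt0].
    have -> : t = 0 by apply/eqP; rewrite eq_le tle0 t0.
    by rewrite mulr0 subr0 subrr.
  have [c /andP[c0 c1] e] := MVT tgt0 (fun x _ => dk x) (@deriv_cont R k _ 0 t dk).
  have -> : g1 t - g1 0 - M * t = k t - k 0 by rewrite /k mulr0 subr0 addrAC.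
  rewrite e subr0 pmulr_lle0 // subr_le0; apply: hM.
  by rewrite (ltW c0) /= (le_trans (ltW c1)).
pose h := fun t => g t - g1 0 * t - M / 2 * t ^+ 2.
have dh (t:R) : is_derive t (1:R) h (g1 t - g1 0 - M / 2 * (2 * t)).
  apply: is_deriveB; first exact: (is_deriveB (dg t) (is_derive_lin R _ t)).
  exact: (is_deriveZ (M/2) (is_derive_sq R t)).
have [c /andP[c0 c1] e] := MVT ltr01 (fun x _ => dh x) (@deriv_cont R h _ 0 1 dh).
have : h 1 - h 0 <= 0.
  rewrite e subr0 mulr1.
  have -> : M / 2 * (2 * c) = M * c by rewrite mulrA mulfVK // pnatr_eq0.
  by apply: kle; rewrite !ltW.
rewrite /h !mulr0 !mulr1 expr0n /= mulr0 !subr0 expr1n mulr1.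
move=> H; lra.
Qed.

Lemma diff_approx (R : realType) (V : normedModType R) (g : V -> R) z :
  differentiable g z -> forall eps, 0 < eps -> exists2 d, 0 < d &
  forall w, `|w| < d -> `|g (w + z) - g z - 'd g z w| <= eps * `|w|.
Proof.
move=> dg eps e0.
have /eqaddoP H := diff_locally dg.
have := H eps e0; move=> /nbhs_ballP [d d0 hd]; exists d => // w wd.
have := hd w; rewrite -ball_normE /= sub0r normrN => /(_ wd) /=.
by rewrite opprD addrA.
Qed.

Section G.
Variables (R : realType) (V : normedModType R).

Lemma line_quotV (f : V -> R) x v t :
  (fun h : R => h^-1 *: (((fun s : R => f (x + s *: v)) \o shift t) (h *: 1) - f (x + t *: v)))
  = (fun h : R => h^-1 *: ((f \o shift (x + t *: v)) (h *: v) - f (x + t *: v))).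
Proof.
apply: funext => h /=; congr (_ *: (f _ - _)).
have -> : h%:A = h :> R by rewrite /GRing.scale /= mulr1.
by rewrite scalerDl addrCA addrA.
Qed.

Lemma D2V (f : V -> R) x v t : derivable f (x + t *: v) v ->
  is_derive t (1:R) (fun s : R => f (x + s *: v)) ('D_v f (x + t *: v)).
Proof.
move=> d; apply: DeriveDef.
  by rewrite /derivable line_quotV.
by rewrite /derive line_quotV.
Qed.

Lemma schwarz_half (f : V -> R) z a b r :
  0 < r -> (forall y, `|y - z| < r -> differentiable f y) ->
  differentiable (fun y => 'D_a f y) z ->
  forall eps, 0 < eps -> exists2 s0, 0 < s0 & forall s, 0 < s <= s0 ->
  `| f (z + s *: a + s *: b) - f (z + s *: a) - f (z + s *: b) + f z
     - s ^+ 2 * 'D_b (fun y => 'D_a f y) z | <= eps * s ^+ 2.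
Proof.
move=> r0 df dpa eps e0.
set pa := fun y => 'D_a f y.
set C := `|a| + `|b| + 1.
have C0 : 0 < C by rewrite /C ltr_pwDr // addr_ge0.
have e'0 : 0 < eps / (2 * C) by rewrite divr_gt0 // mulr_gt0.
have [d d0 hd] := @diff_approx R V _ _ dpa _ e'0.
set m := Num.min r d.
have m0 : 0 < m by rewrite lt_min r0 d0.
exists (m / C); first by rewrite divr_gt0.
move=> s /andP[s0 sle].
have sC : s * C <= m by rewrite -ler_pdivlMr.
have nb t : 0 <= t <= s -> `|s *: b + t *: a| < s * C /\ `|t *: a| < s * C.
  move=> /andP[t0 ts].
  have h1 : `|t *: a| <= s * `|a|.
    by rewrite normrZ ger0_norm // ler_wpM2r.
  have h2 : `|s *: b + t *: a| <= s * `|b| + s * `|a|.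
    by apply: (le_trans (ler_normD _ _)); rewrite normrZ gtr0_norm // lerD2l.
  have h3 : s * `|b| + s * `|a| < s * C.
    rewrite -mulrDr ltr_pM2l // /C; lra.
  split; first exact: (le_lt_trans h2 h3).
  apply: le_lt_trans h1 _.
  rewrite ltr_pM2l // /C; have := normr_ge0 b; lra.
pose phi := fun t : R => f ((z + s *: b) + t *: a) - f (z + t *: a).
have dphi t : 0 <= t <= s ->
    is_derive t (1:R) phi (pa ((z + s *: b) + t *: a) - pa (z + t *: a)).
  move=> ht; have [n1 n2] := nb t ht.
  apply: is_deriveB; apply: D2V; apply: diff_derivable; apply: df.
    have -> : z + s *: b + t *: a - z = s *: b + t *: a by rewrite addrAC [z + _]addrC addrK.
    by apply: (lt_le_trans (lt_le_trans n1 sC)); rewrite /m ge_min lexx.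
  have -> : z + t *: a - z = t *: a by rewrite [z + _]addrC addrK.
  by apply: (lt_le_trans (lt_le_trans n2 sC)); rewrite /m ge_min lexx.
have [th /andP[th0 th1] e] : exists2 th, th \in `]0, s[%R &
    phi s - phi 0 = (pa ((z + s *: b) + th *: a) - pa (z + th *: a)) * (s - 0).
  apply: MVT => // [x|].
    by rewrite in_itv /= => /andP[x0 x1]; apply: dphi; rewrite !ltW.
  apply: derivable_within_continuous => x.
  rewrite in_itv /= => hx; by have [] := dphi x hx.
have [n1 n2] : `|s *: b + th *: a| < s * C /\ `|th *: a| < s * C by apply: nb; rewrite !ltW.
set w1 := s *: b + th *: a; set w2 := th *: a.
have dm (w : V) : `|w| < s * C -> `|w| < d.
  by move=> h; apply: (lt_le_trans (lt_le_trans h sC)); rewrite /m ge_min lexx orbT.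
pose e1 := pa (w1 + z) - pa z - 'd pa z w1.
pose e2 := pa (w2 + z) - pa z - 'd pa z w2.
have E1 : `|e1| <= eps / (2 * C) * `|w1| by exact: hd w1 (dm w1 n1).
have E2 : `|e2| <= eps / (2 * C) * `|w2| by exact: hd w2 (dm w2 n2).
have lin : 'd pa z w1 - 'd pa z w2 = s * 'd pa z b.
  by rewrite /w1 /w2 linearD linearZ /= addrK.
have eD : f (z + s *: a + s *: b) - f (z + s *: a) - f (z + s *: b) + f z
          - s ^+ 2 * 'D_b pa z = (e1 - e2) * s.
  have -> : f (z + s *: a + s *: b) - f (z + s *: a) - f (z + s *: b) + f z
      = phi s - phi 0.
    rewrite /phi /= (scale0r a) !addr0 [z + s *: a + _]addrAC; ring.
  rewrite e subr0 (deriveE _ dpa) -/pa.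
  have -> : z + s *: b + th *: a = w1 + z by rewrite /w1 [RHS]addrC addrA.
  have -> : z + th *: a = w2 + z by rewrite [RHS]addrC.
  rewrite /e1 /e2 expr2 -mulrA -lin; ring.
rewrite eD normrM (gtr0_norm s0) expr2 mulrA ler_wpM2r ?(ltW s0) //.
apply: (le_trans (ler_normB _ _)).
have : `|e1| + `|e2| <= eps / (2 * C) * (s * C) + eps / (2 * C) * (s * C).
  apply: lerD.
    by apply: (le_trans E1); rewrite ler_wpM2l ?ltW.
  by apply: (le_trans E2); rewrite ler_wpM2l ?ltW.
have -> : eps / (2 * C) * (s * C) + eps / (2 * C) * (s * C) = eps * s.
  by field; rewrite gt_eqF.
done.
Qed.

Lemma small_eq0 (x : R) : (forall eps, 0 < eps -> `|x| <= eps) -> x = 0.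
Proof.
move=> H; apply/eqP; apply/negPn/negP => x0.
have hx : 0 < `|x| by rewrite normr_gt0.
have := H (`|x| / 2) (divr_gt0 hx (ltr0Sn _ 1)); lra.
Qed.

Lemma schwarz (f : V -> R) z a b r :
  0 < r -> (forall y, `|y - z| < r -> differentiable f y) ->
  differentiable (fun y => 'D_a f y) z -> differentiable (fun y => 'D_b f y) z ->
  'D_b (fun y => 'D_a f y) z = 'D_a (fun y => 'D_b f y) z.
Proof.
move=> r0 df da db; apply/eqP; rewrite -subr_eq0; apply/eqP/small_eq0 => eps e0.
have e20 : 0 < eps / 2 by rewrite divr_gt0.
have [s0 s00 H0] := @schwarz_half f z a b r r0 df da _ e20.
have [s1 s10 H1] := @schwarz_half f z b a r r0 df db _ e20.
set s := Num.min s0 s1.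
have s0' : 0 < s by rewrite lt_min s00 s10.
have := H0 s; rewrite s0' ge_min lexx /= => /(_ isT) K0.
have := H1 s; rewrite s0' ge_min lexx orbT /= => /(_ isT) K1.
rewrite [z + s *: b + s *: a]addrAC in K1.
set D := f (z + s *: a + s *: b) in K0 K1.
set A := 'D_b (fun y => 'D_a f y) z in K0 *.
set B := 'D_a (fun y => 'D_b f y) z in K1 *.
have s2 : 0 < s ^+ 2 by rewrite exprn_gt0.
rewrite -(ler_pM2r s2).
have -> : `|A - B| * s ^+ 2 = `|(D - f (z + s *: a) - f (z + s *: b) + f z - s ^+ 2 * B)
   - (D - f (z + s *: a) - f (z + s *: b) + f z - s ^+ 2 * A)|.
  rewrite -[in LHS](gtr0_norm s2) -normrM; congr (`|_|); ring.
rewrite [D - f (z + s *: b) - _]addrAC in K1.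
apply: (le_trans (ler_normB _ _)); apply: (le_trans (lerD K1 K0)).
by rewrite -mulrDl -splitr.
Qed.
End G.

Set Implicit Arguments. Unset Strict Implicit. Unset Printing Implicit Defensive.

Section LA.
Variables (R : realType) (n : nat).
Implicit Types (A P : 'M[R]_n) (u w : 'rV[R]_n).

Definition bf A u w : R := (u *m A *m w^T) 0 0.
Definition qf A u : R := bf A u u.

Lemma bf_sum A u w : bf A u w = \sum_i \sum_j u 0 i * A i j * w 0 j.
Proof.
rewrite /bf mxE; under eq_bigr => j _ do rewrite !mxE big_distrl /=.
by rewrite exchange_big.
Qed.

Lemma qf1_sum u : qf 1%:M u = \sum_i u 0 i ^+ 2.
Proof.
rewrite /qf /bf mulmx1 mxE; apply: eq_bigr => i _; by rewrite mxE expr2.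
Qed.

Lemma qf1_ge0 u : 0 <= qf 1%:M u.
Proof. by rewrite qf1_sum sumr_ge0 // => i _; rewrite sqr_ge0. Qed.

Lemma qf1_gt0 u : u != 0 -> 0 < qf 1%:M u.
Proof.
move=> u0; rewrite lt_def qf1_ge0 andbT; apply/negP; rewrite qf1_sum.
move=> /eqP /psumr_eq0P H; apply/negP: u0; rewrite negbK; apply/eqP/rowP => i.
rewrite mxE; apply/eqP; rewrite -sqrf_eq0; apply/eqP/H => // j _.
by rewrite sqr_ge0.
Qed.

Lemma bfDl A u1 u2 w : bf A (u1 + u2) w = bf A u1 w + bf A u2 w.
Proof. by rewrite /bf !mulmxDl mxE. Qed.
Lemma bfDr A u w1 w2 : bf A u (w1 + w2) = bf A u w1 + bf A u w2.
Proof. by rewrite /bf linearD /= mulmxDr mxE. Qed.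
Lemma bfZl A c u w : bf A (c *: u) w = c * bf A u w.
Proof. by rewrite /bf -!scalemxAl mxE. Qed.
Lemma bfZr A c u w : bf A u (c *: w) = c * bf A u w.
Proof. by rewrite /bf linearZ /= -scalemxAr mxE. Qed.
Lemma bf0l A w : bf A 0 w = 0.
Proof. by rewrite /bf !mul0mx mxE. Qed.
Lemma bfBM A B u w : bf (A - B) u w = bf A u w - bf B u w.
Proof. by rewrite /bf mulmxBr mulmxBl !mxE. Qed.
Lemma bf_scalar c u w : bf c%:M u w = c * bf 1%:M u w.
Proof. by rewrite /bf mul_mx_scalar mulmx1 -scalemxAl mxE. Qed.
Lemma bf_sym A u w : A^T = A -> bf A w u = bf A u w.
Proof.
move=> sA; rewrite /bf.
have -> : (w *m A *m u^T) 0 0 = (w *m A *m u^T)^T 0 0 by rewrite [in RHS]mxE.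
by rewrite !trmx_mul trmxK sA mulmxA.
Qed.

Lemma cont_sum (T : topologicalType) m (F : 'I_m -> T -> R) :
  (forall i, continuous (F i)) -> continuous (fun x => \sum_(i < m) F i x).
Proof.
elim: m F => [|m IH] F cF.
  have -> : (fun x => \sum_(i < 0) F i x) = fun=> 0 by apply: funext => x; rewrite big_ord0.
  by move=> x; exact: cvg_cst.
have -> : (fun x => \sum_(i < m.+1) F i x) =
    (fun x => \sum_(i < m) F (widen_ord (leqnSn m) i) x) \+ F ord_max.
  by apply: funext => x; rewrite big_ord_recr.
move=> x; apply: continuousD; last exact: cF.
by apply: IH => i; exact: cF.
Qed.

Lemma qf_cont A : continuous (qf A).
Proof.
have -> : qf A = fun u => \sum_i \sum_j u 0 i * A i j * u 0 j.
  by apply: funext => u; rewrite /qf bf_sum.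
apply: cont_sum => i; apply: cont_sum => j x.
apply: (continuousM (s := fun u : 'rV[R]_n => u 0 i * A i j) (t := fun u => u 0 j)); last exact: coord_continuous.
apply: (continuousM (s := fun u : 'rV[R]_n => u 0 i) (t := fun=> A i j)); first exact: coord_continuous.
exact: cst_continuous.
Qed.
Lemma quad_zero (b Q k : R) : 0 <= Q -> 0 < k -> k * (Q + 1) = 1 ->
  0 <= 2 * (- b * k) * b + (- b * k) ^+ 2 * Q -> b = 0.
Proof.
move=> Q0 k0 kQ H.
have kQ' : k * Q = 1 - k by rewrite -kQ; ring.
have e : 2 * (- b * k) * b + (- b * k) ^+ 2 * Q = - (b ^+ 2 * (k * (1 + k))).
  have -> : (- b * k) ^+ 2 * Q = b ^+ 2 * k * (k * Q) by ring.
  rewrite kQ'; ring.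
move: H; rewrite e oppr_ge0 => H.
have p : 0 < k * (1 + k) by rewrite mulr_gt0 // addr_gt0.
have : b ^+ 2 <= 0 by rewrite -(pmulr_lle0 _ p).
by move=> hb; apply/eqP; rewrite -sqrf_eq0 eq_le hb sqr_ge0.
Qed.

Lemma single_le_sum m (F : 'I_m -> R) i : (forall j, 0 <= F j) -> F i <= \sum_j F j.
Proof.
move=> F0; rewrite (bigD1 i) //= lerDl; apply: sumr_ge0 => j _; exact: F0.
Qed.

End LA.
Arguments bf {R n}. Arguments qf {R n}.
Section LA2.
Variable R : realType.
Lemma qf_le_lmax n (A : 'M[R]_n) : A^T = A ->
  forall u, qf A u <= sup [set a : R | eigenvalue A a] * qf 1%:M u.
Proof.
case: n A => [|m] A sA u.
  by rewrite (thinmx0 u) /qf !bf0l mulr0.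
pose Sph := [set v : 'rV[R]_m.+1 | qf 1%:M v = 1].
have Sne : Sph !=set0.
  exists (delta_mx 0 0); rewrite /Sph /= qf1_sum (bigD1 ord0) //= big1.
    by rewrite mxE eqxx expr1n addr0.
  by move=> i /negbTE ne; rewrite mxE ne andbF expr0n.
have cpt : compact Sph.
  have cB := @rV_compact R m.+1 (fun=> `[-1, 1]%classic) (fun _ => @segment_compact R (-1) 1).
  apply: (subclosed_compact _ cB).
    apply: (preimage_closed (f := qf 1%:M) (D := [set x | x = 1])); last exact: closed_eq.
    by move=> x _; exact: qf_cont.
  move=> v /= Sv i; rewrite in_itv /=.
  have : v 0 i ^+ 2 <= 1.
    rewrite -Sv qf1_sum; apply: (@single_le_sum R _ (fun j => v 0 j ^+ 2) i) => j.
    exact: sqr_ge0.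
  move=> h; apply/andP; split; nra.
have [us usS maxu] := compact_EVT_max Sne cpt (continuous_subspaceT (@qf_cont R m.+1 A)).
rewrite inE /Sph /= in usS.
have maxS v : qf 1%:M v = 1 -> qf A v <= qf A us.
  by move=> h; apply: maxu; rewrite inE.
set mu := qf A us.
have qfZ (B : 'M[R]_m.+1) c v : qf B (c *: v) = c ^+ 2 * qf B v.
  by rewrite /qf bfZl bfZr expr2 mulrA.
have bound v : qf A v <= mu * qf 1%:M v.
  have [->|v0] := eqVneq v 0; first by rewrite /qf !bf0l mulr0.
  have q0 := qf1_gt0 v0.
  set q := qf 1%:M v in q0 *.
  pose c := (Num.sqrt q)^-1.
  have c2 : c ^+ 2 = q^-1 by rewrite /c exprVn sqr_sqrtr // ltW.
  have := maxS (c *: v); rewrite !qfZ c2 -/q mulVf ?gt_eqF // => /(_ erefl).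
  by rewrite -/mu mulrC ler_pdivrMr // mulrC.
pose P := mu%:M - A.
have sP : P^T = P by rewrite /P linearB /= tr_scalar_mx sA.
have qP v : qf P v = mu * qf 1%:M v - qf A v.
  by rewrite /qf /P bfBM bf_scalar.
have qP0 v : 0 <= qf P v by rewrite qP subr_ge0.
have qPus : qf P us = 0 by rewrite qP usS mulr1 subrr.
have bz w : bf P us w = 0.
  set Q := qf P w; set b := bf P us w.
  have Q0 : 0 <= Q := qP0 w.
  pose k := (Q + 1)^-1.
  have k0 : 0 < k by rewrite /k invr_gt0 ltr_pwDr.
  have kQ : k * (Q + 1) = 1 by rewrite /k mulVf // gt_eqF // ltr_pwDr.
  apply: (quad_zero Q0 k0 kQ).
  have := qP0 (us + (- b * k) *: w).
  rewrite /qf bfDl !bfDr !bfZl !bfZr (bf_sym us w sP) -/b.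
  have -> : bf P us us = 0 by exact: qPus.
  rewrite -/(qf P w) -/Q => h; apply: (le_trans h); rewrite le_eqVlt; apply/orP; left.
  apply/eqP; ring.
have usP : us *m P = 0.
  apply/rowP => j.
  have := bz (delta_mx 0 j); rewrite /bf trmx_delta -colE [(col _ _) 0 0]mxE => ->.
  by rewrite mxE.
have us0 : us != 0.
  by apply/negP => /eqP e; move: usS; rewrite e /qf bf0l => /eqP; rewrite eq_sym oner_eq0.
have eigmu : eigenvalue A mu.
  apply/eigenvalueP; exists us => //.
  by move: usP; rewrite /P mulmxBr mul_mx_scalar => /eqP; rewrite subr_eq0 => /eqP <-.
have ubE : ubound [set a : R | eigenvalue A a] mu.
  move=> a /eigenvalueP [w wA w0].
  have : qf A w = a * qf 1%:M w.
    by rewrite /qf /bf wA mulmx1 -scalemxAl mxE.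
  have := bound w => h1 h2; rewrite h2 in h1.
  by rewrite -(ler_pM2r (qf1_gt0 w0)).
apply: (le_trans (bound u)); rewrite ler_wpM2r ?qf1_ge0 //.
by apply: ub_le_sup => //; exists mu.
Qed.
End LA2.

Section Blocks.
Variables (R : realType) (K : nat) (dk : 'I_K -> nat).
Local Notation n := (tot_dim dk).
Local Notation inb := (in_block dk).

Lemma sum_le_sub (k k' : 'I_K) : (k < k')%N ->
  (\sum_(j < K | (j <= k)%N) dk j <= \sum_(j < K | (j < k')%N) dk j)%N.
Proof.
move=> kk'; rewrite [X in (_ <= X)%N](bigID (fun j : 'I_K => (j <= k)%N)) /=.
apply: leq_trans (leq_addr _ _); rewrite leq_eqVlt; apply/orP; left; apply/eqP.
apply: eq_bigl => j /=.
by case: (leqP j k) => jk; rewrite ?andbF ?andbT // (leq_ltn_trans jk kk').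
Qed.

Lemma inb_uniq (k k' : 'I_K) (i : nat) : inb k i -> inb k' i -> k = k'.
Proof.
rewrite /in_block => /andP[a1 a2] /andP[b1 b2].
apply/eqP; rewrite -val_eqE; case: (ltngtP k k') => // h.
  have := sum_le_sub h; lia.
have := sum_le_sub h; lia.
Qed.

Definition sc (c : 'I_K -> R) (i : nat) := \sum_(k < K | inb k i) c k.

Lemma sc_in c k i : inb k i -> sc c i = c k.
Proof.
move=> ki; rewrite /sc (bigD1 k) //= big1 ?addr0 // => k' /andP[k'i ne].
by move: ne; rewrite (inb_uniq k'i ki) eqxx.
Qed.

Lemma sc_out c i : (forall k, ~~ inb k i) -> sc c i = 0.
Proof. by move=> h; rewrite /sc big_pred0 // => k; apply/negbTE. Qed.

Lemma blk_scaleE c (x : 'rV[R]_n) (i : 'I_n) :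
  (blk_scale c x) ord0 i = sc c i * x ord0 i.
Proof. by rewrite mxE. Qed.

Lemma blk_scale_lin c (y v : 'rV[R]_n) (t : R) :
  blk_scale c (y + t *: v) = blk_scale c y + t *: blk_scale c v.
Proof. apply/rowP => i; rewrite !mxE; ring. Qed.

Lemma blk_sqnorm_scale c (x : 'rV[R]_n) k :
  blk_sqnorm (blk_scale c x) k = c k ^+ 2 * blk_sqnorm x k.
Proof.
rewrite /blk_sqnorm mulr_sumr; apply: eq_bigr => i ki.
by rewrite blk_scaleE (sc_in _ ki) exprMn.
Qed.

Lemma blk_sqnormD (x v : 'rV[R]_n) (t : R) k : blk_dot x v k = 0 ->
  blk_sqnorm (x + t *: v) k = blk_sqnorm x k + t ^+ 2 * blk_sqnorm v k.
Proof.
move=> h; rewrite /blk_sqnorm.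
have -> : \sum_(i < n | inb k i) (x + t *: v) ord0 i ^+ 2 =
   \sum_(i < n | inb k i) (x ord0 i ^+ 2 + t ^+ 2 * v ord0 i ^+ 2 + (2 * t) * (x ord0 i * v ord0 i)).
  by apply: eq_bigr => i _; rewrite !mxE; ring.
rewrite !big_split /= -mulr_sumr -mulr_sumr.
by move: h; rewrite /blk_dot => ->; rewrite mulr0 addr0.
Qed.

Lemma blk_sqnorm_ge0 (x : 'rV[R]_n) k : 0 <= blk_sqnorm x k.
Proof. by apply: sumr_ge0 => i _; rewrite sqr_ge0. Qed.

Lemma blk_nonzeroP (x : 'rV[R]_n) k : blk_nonzero x k = (0 < blk_sqnorm x k).
Proof.
apply/idP/idP.
  move=> /existsP [i /andP[ki xi]]; rewrite /blk_sqnorm (bigD1 i) //=.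
  apply: ltr_pwDl; first by rewrite lt_def sqr_ge0 sqrf_eq0 xi.
  by apply: sumr_ge0 => ? _; rewrite sqr_ge0.
move=> h; rewrite /blk_nonzero; case: (boolP [exists i : 'I_n, inb k i && (x ord0 i != 0)]) => // /existsPn H; move: h.
rewrite /blk_sqnorm big1 ?ltxx // => i ki.
by move: (H i); rewrite ki /= negbK => /eqP ->; rewrite expr0n.
Qed.

Lemma sum_blocks (F : 'I_n -> R) : (forall i : 'I_n, (forall k, ~~ inb k i) -> F i = 0) ->
  \sum_i F i = \sum_(k < K) \sum_(i < n | inb k i) F i.
Proof.
move=> F0.
under [RHS]eq_bigr => k _ do rewrite big_mkcond /=.
rewrite exchange_big /=; apply: eq_bigr => i _.
case: (pickP (fun k : 'I_K => inb k i)) => [k ki|none].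
  rewrite (bigD1 k) //= ki big1 ?addr0 // => k' ne.
  by case: ifP => // k'i; move: ne; rewrite (inb_uniq k'i ki) eqxx.
rewrite big1 ?F0 // => k; first by rewrite none.
  by move=> _; rewrite none.
by rewrite none.
Qed.
End Blocks.

Section Main.
Variables (R : realType) (K : nat) (dk : 'I_K -> nat).
Local Notation n := (tot_dim dk).
Implicit Types (f : 'rV[R]_n -> R) (x y z v w : 'rV[R]_n).

Lemma D1 f y v : differentiable f y ->
  'D_v f y = \sum_(i < n) v ord0 i * partial i f y.
Proof.
move=> df; rewrite deriveE // {1}(row_sum_delta v) linear_sum.
by apply: eq_bigr => i _; rewrite linearZ /= /partial /e_ deriveE.
Qed.

Lemma is_derive_uniq (g : R -> R) t a b :
  is_derive t (1:R) g a -> is_derive t (1:R) g b -> a = b.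
Proof. by move=> h1 h2; rewrite -(@derive_val _ _ _ _ _ _ _ h1) (@derive_val _ _ _ _ _ _ _ h2). Qed.

Definition G f w y := fun t : R => \sum_(i < n) w ord0 i * partial i f (y + t *: w).

Lemma dG1 f w y t : differentiable f (y + t *: w) ->
  is_derive t (1:R) (fun s : R => f (y + s *: w)) (G f w y t).
Proof.
move=> df; rewrite /G -D1 //; apply: D2V; exact: diff_derivable.
Qed.

Lemma dG2 f w y t : (forall i, differentiable (partial i f) (y + t *: w)) ->
  is_derive t (1:R) (G f w y) (qf (hessian f (y + t *: w)) w).
Proof.
move=> dp.
have -> : G f w y = \sum_(i < n) (fun s : R => w ord0 i * partial i f (y + s *: w)).
  by rewrite fct_sumE.
have -> : qf (hessian f (y + t *: w)) w =
    \sum_(i < n) w ord0 i *: 'D_w (partial i f) (y + t *: w).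
  rewrite /qf bf_sum; apply: eq_bigr => i _.
  rewrite (D1 _ (dp i)) scaler_sumr; apply: eq_bigr => j _.
  by rewrite /hessian mxE /GRing.scale /=; ring.
apply: is_derive_sum => i.
have := is_deriveZ (w ord0 i) (@D2V R _ (partial i f) y w t (diff_derivable (v := w) (dp i))).
by [].
Qed.

Lemma U_open z : @U_set R K dk z -> exists2 r : R, 0 < r & forall y, `|y - z| < r -> @U_set R K dk y.
Proof.
move=> Uz.
have : \forall y \near z, forall k, blk_nonzero y k.
  apply: (@filter_forall _ _ (fun k y => blk_nonzero y k) (nbhs z)) => k.
  have /existsP [i /andP[ki zi]] := Uz k.
  have nb : nbhs (z ord0 i) [set a : R | a != 0].
    apply/nbhs_ballP; exists `|z ord0 i|; first by rewrite /= normr_gt0.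
    move=> a; rewrite -ball_normE /= => h; apply/negP => /eqP a0; move: h.
    by rewrite a0 subr0 ltxx.
  have := @coord_continuous R 1 n ord0 i z _ nb.
  move=> H; near=> y; apply/existsP; exists i; rewrite ki /=; near: y; exact: H.
move=> /nbhs_ballP [r r0 hr]; exists r => // y yz; apply: hr.
by rewrite -ball_normE /= distrC.
Unshelve. all: by end_near.
Qed.

Variables (L : 'rV[R]_n -> R)
  (hdiff : twice_differentiable_on L (@U_set R K dk)).

Lemma hess_sym z : @U_set R K dk z -> (hessian L z)^T = hessian L z.
Proof.
move=> Uz; have [r r0 hr] := U_open Uz.
apply/matrixP => i j; rewrite !mxE /partial.
have dL y : `|y - z| < r -> differentiable L y by move=> h; have [] := hdiff (hr y h).
have [_ dp] := hdiff Uz.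
exact: (@schwarz R _ L z (@e_ R K dk j) (@e_ R K dk i) r r0 dL (dp j) (dp i)).
Qed.

Hypothesis hrho : has_ubound (rho_set L).

Lemma qf_bound z : @U_set R K dk z -> (forall k, blk_sqnorm z k = 1) ->
  forall w, qf (hessian L z) w <= sup (rho_set L) * qf 1%:M w.
Proof.
move=> Uz z1 w; apply: (le_trans (qf_le_lmax (hess_sym Uz) w)).
rewrite ler_wpM2r ?qf1_ge0 //; apply: ub_le_sup => //.
by exists z.
Qed.

Hypothesis hinv : multi_group_scale_invariant L (@U_set R K dk).

Lemma Uscale c y : (forall k, 0 < c k) -> @U_set R K dk y -> @U_set R K dk (blk_scale c y).
Proof.
move=> c0 Uy k; rewrite blk_nonzeroP blk_sqnorm_scale mulr_gt0 ?exprn_gt0 //.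
by rewrite -blk_nonzeroP.
Qed.

Lemma qf1_scale c w : qf 1%:M (blk_scale c w) = \sum_(k < K) c k ^+ 2 * blk_sqnorm w k.
Proof.
rewrite qf1_sum (@sum_blocks R K dk (fun i => (blk_scale c w) ord0 i ^+ 2)).
  by apply: eq_bigr => k _; rewrite -blk_sqnorm_scale.
by move=> i none; rewrite blk_scaleE sc_out // mul0r expr0n.
Qed.

Lemma second_deriv_eq c y v : (forall k, 0 < c k) ->
  (forall t : R, @U_set R K dk (y + t *: v)) ->
  qf (hessian L y) v = qf (hessian L (blk_scale c y)) (blk_scale c v).
Proof.
move=> c0 Uy.
set z := blk_scale c y; set w := blk_scale c v.
have Uzw t : @U_set R K dk (z + t *: w) by rewrite /z /w -blk_scale_lin; exact: Uscale.
have fe : (fun t : R => L (y + t *: v)) = (fun t : R => L (z + t *: w)).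
  apply: funext => t; rewrite /z /w -blk_scale_lin.
  by rewrite (hinv (Uy t) c0).
have Ge : G L v y = G L w z.
  apply: funext => t; apply: (@is_derive_uniq (fun t : R => L (y + t *: v)) t).
    by apply: dG1; have [] := hdiff (Uy t).
  by rewrite fe; apply: dG1; have [] := hdiff (Uzw t).
have d1 : is_derive (0:R) (1:R) (G L v y) (qf (hessian L (y + 0 *: v)) v).
  by apply: dG2; have [] := hdiff (Uy 0).
have d2 : is_derive (0:R) (1:R) (G L w z) (qf (hessian L (z + 0 *: w)) w).
  by apply: dG2; have [] := hdiff (Uzw 0).
rewrite Ge in d1; have := is_derive_uniq d1 d2.
by rewrite !scale0r !addr0.
Qed.

Definition nc y (k : 'I_K) : R := (Num.sqrt (blk_sqnorm y k))^-1.

Lemma nc_gt0 y : @U_set R K dk y -> forall k, 0 < nc y k.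
Proof. by move=> Uy k; rewrite /nc invr_gt0 sqrtr_gt0 -blk_nonzeroP. Qed.

Lemma nc_sq y k : @U_set R K dk y -> nc y k ^+ 2 = (blk_sqnorm y k)^-1.
Proof. by move=> Uy; rewrite /nc exprVn sqr_sqrtr // blk_sqnorm_ge0. Qed.

Lemma nc_norm y k : @U_set R K dk y -> blk_sqnorm (blk_scale (nc y) y) k = 1.
Proof.
move=> Uy; rewrite blk_sqnorm_scale nc_sq // mulVf // gt_eqF //.
by rewrite -blk_nonzeroP.
Qed.

Lemma rho_ge0 x (k0 : 'I_K) : @U_set R K dk x -> 0 <= sup (rho_set L).
Proof.
move=> Ux.
set z := blk_scale (nc x) x.
have Uz : @U_set R K dk z := Uscale (nc_gt0 Ux) Ux.
have z1 k : blk_sqnorm z k = 1 := nc_norm k Ux.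
have ray t : -1 < t -> z + t *: z = blk_scale (fun=> 1 + t) z.
  move=> _; apply/rowP => i; rewrite blk_scaleE !mxE.
  case: (pickP (fun k : 'I_K => in_block dk k i)) => [k ki|none].
    by rewrite (sc_in _ ki); ring.
  have P0 : (fun k : 'I_K => in_block dk k i) =1 xpred0 by move=> k; rewrite none.
  by rewrite !big_pred0 //; ring.
have Uray t : -1 < t -> @U_set R K dk (z + t *: z).
  by move=> t1; rewrite ray //; apply: Uscale => // _; lra.
have phic t : -1 < t -> L (z + t *: z) = L z.
  by move=> t1; rewrite ray // hinv // => _; lra.
have G0 t : -1 < t -> G L z z t = 0.
  move=> t1; apply: (@is_derive_uniq (fun s : R => L (z + s *: z)) t).
    by apply: dG1; have [] := hdiff (Uray t t1).
  apply: (@near_eq_is_derive _ _ _ (cst (L z))).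
  near=> s; rewrite /= phic //; near: s; exact: lt_nbhsr.
have qz : qf (hessian L z) z = 0.
  have d1 : is_derive (0:R) (1:R) (G L z z) (qf (hessian L (z + 0 *: z)) z).
    by apply: dG2; have [] := hdiff (Uray 0 (ltrN10 R)).
  rewrite scale0r addr0 in d1; apply: (is_derive_uniq d1).
  apply: (@near_eq_is_derive _ _ _ (cst 0)).
  near=> s; rewrite /= G0 //; near: s; exact: lt_nbhsr (ltrN10 R).
have := qf_bound Uz z1 z; rewrite qz qf1_scale.
have -> : \sum_(k < K) nc x k ^+ 2 * blk_sqnorm x k = \sum_(k < K) 1.
  by apply: eq_bigr => k _; rewrite nc_sq // mulVf // gt_eqF // -blk_nonzeroP.
rewrite pmulr_lge0 // sumr_const card_ord ltr0n.
by apply: (leq_ltn_trans (leq0n k0) (ltn_ord k0)).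
Unshelve. all: by end_near.
Qed.

Lemma main_sec x v : @U_set R K dk x -> (forall k, blk_dot x v k = 0) ->
  L (x + v) - L x <=
    dot v (gradient L x)
    + sup (rho_set L) / 2 * \sum_(k < K) blk_sqnorm v k / blk_sqnorm x k.
Proof.
move=> Ux hxv.
set rho := sup (rho_set L).
have bx0 k : 0 < blk_sqnorm x k by rewrite -blk_nonzeroP.
have byk t k : blk_sqnorm (x + t *: v) k = blk_sqnorm x k + t ^+ 2 * blk_sqnorm v k.
  exact: blk_sqnormD.
have by_ge t k : blk_sqnorm x k <= blk_sqnorm (x + t *: v) k.
  by rewrite byk lerDl mulr_ge0 ?sqr_ge0 ?blk_sqnorm_ge0.
have Uy t : @U_set R K dk (x + t *: v).
  by move=> k; rewrite blk_nonzeroP (lt_le_trans (bx0 k) (by_ge t k)).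
have hS t : rho * (\sum_(k < K) blk_sqnorm v k / blk_sqnorm (x + t *: v) k)
    <= rho * (\sum_(k < K) blk_sqnorm v k / blk_sqnorm x k).
  case: (pickP (fun _ : 'I_K => true)) => [k0 _|none].
    rewrite ler_wpM2l ?(rho_ge0 k0 Ux) //; apply: ler_sum => k _.
    rewrite ler_wpM2l ?blk_sqnorm_ge0 // lef_pV2 ?posrE //.
    exact: lt_le_trans (bx0 k) (by_ge t k).
  by rewrite !big1 // => k; have := none k.
have bound t : 0 <= t <= 1 -> qf (hessian L (x + t *: v)) v <=
    rho * (\sum_(k < K) blk_sqnorm v k / blk_sqnorm x k).
  move=> _; apply: le_trans (hS t).
  set y := x + t *: v.
  have Uy' s : @U_set R K dk (y + s *: v).
    by rewrite /y -addrA -scalerDl; exact: Uy.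
  rewrite (second_deriv_eq (nc_gt0 (Uy t)) Uy').
  apply: le_trans (qf_bound (Uscale (nc_gt0 (Uy t)) (Uy t)) (fun k => nc_norm k (Uy t)) _) _.
  rewrite qf1_scale le_eqVlt; apply/orP; left; apply/eqP; congr (_ * _).
  apply: eq_bigr => k _.
  by rewrite nc_sq ?Uy // mulrC.
have := @taylor1D R (fun t => L (x + t *: v)) (G L v x)
  (fun t => qf (hessian L (x + t *: v)) v) (rho * \sum_(k < K) blk_sqnorm v k / blk_sqnorm x k).
rewrite scale1r scale0r addr0.
have -> : G L v x 0 = dot v (gradient L x).
  by rewrite /G scale0r addr0 /dot; apply: eq_bigr => i _; rewrite mxE.
have -> : rho * (\sum_(k < K) blk_sqnorm v k / blk_sqnorm x k) / 2 =
  rho / 2 * \sum_(k < K) blk_sqnorm v k / blk_sqnorm x k by rewrite mulrAC.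
apply.
- by move=> t; apply: dG1; have [] := hdiff (Uy t).
- by move=> t; apply: dG2; have [] := hdiff (Uy t).
- exact: bound.
Qed.
End Main.

Unset Implicit Arguments.

Theorem mainTheorem5 (R : realType) (K : nat) (dk : 'I_K -> nat)
  (hdk : forall k, (0 < dk k)%N)
  (L : 'rV[R]_(tot_dim dk) -> R)
  (hinv : multi_group_scale_invariant L ((@U_set R K dk)))
  (hdiff : twice_differentiable_on L ((@U_set R K dk)))
  (hrho : has_ubound (rho_set L)) :
  forall (x v : 'rV[R]_(tot_dim dk)), (@U_set R K dk) x ->
    (forall k, blk_dot x v k = 0) ->
    L (x + v) - L x <=
      dot v (gradient L x)
      + sup (rho_set L) / 2 * \sum_(k < K) blk_sqnorm v k / blk_sqnorm x k.
Proof.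
move=> x v Ux hxv.
exact: (main_sec hdiff hrho hinv Ux hxv).
Qed.
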